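(* Let $X$ be a compact metric space and $G$ a group of homeomorphisms of $X$ generated (as a group) by a finite set $G_1$, and assume $G$ is uniformly equicontinuous. Let $\mathcal G(G)$ be the pseudogroup generated by $G$. Then there is no Borel probability measure on $X$ that is $(\mathcal G(G),G_1)$-weakly expansive.
   Context: $(X,d)$ compact metric space. $\mathrm{Homeo}(X)$: homeomorphisms $g:D_g\to R_g$ between open subsets of $X$, composed on natural domains $D_{h\circ g}=g^{-1}(D_h)$. The pseudogroup generated by $\Gamma\subset\mathrm{Homeo}(X)$ is the set of $g\in\mathrm{Homeo}(X)$ such that each $x\in D_g$ has a neighborhood $U_x\subset D_g$ with $g|_{U_x}=g_1^{e_1}\circ\cdots\circ g_k^{e_k}|_{U_x}$ for some $g_i\in\Gamma$, $e_i\in\{\pm1\}$. $G$ is uniformly equicontinuous if for every $\varepsilon>0$ there is $\delta>0$ such that $d(x,y)<\delta$ implies $d(g(x),g(y))<\varepsilon$ for all $g\in G$ and $x,y\in X$. With generating set $G_1$: $\mathcal G_n=\{g_1\circ\cdots\circ g_n:g_i\in G_1\}$, $\mathcal G_n^x=\{g\in\mathcal G_n:x\in D_g\}$, $\Phi_\delta(x)=\{y\in X: d(g(x),g(y))\le\delta\ \forall n\in\mathbb N,\ \forall g\in\mathcal G_n^x\cap\mathcal G_n^y\}$. A Borel probability measure $\mu$ is $(\mathcal G(G),G_1)$-weakly expansive if there is $\delta>0$ with $\mu(\Phi_\delta(x))=0$ for $\mu$-a.e. $x$. *)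

(* Defs.v *)
From HB Require Import structures.
From mathcomp Require Import all_boot all_order all_algebra.
From mathcomp Require Import all_classical all_reals all_analysis.
Set Implicit Arguments. Unset Strict Implicit. Unset Printing Implicit Defensive.
Import Order.TTheory GRing.Theory Num.Theory.
Local Open Scope classical_set_scope.
Local Open Scope ring_scope.

(* metric spaces with a distinguished point: measurable types in
   MathComp-Analysis are pointed, so the Borel sigma-algebra needs one *)
#[short(type="pointedMetricType")]
HB.structure Definition PointedMetric (K : numDomainType) :=
  { M of Pointed M & Metric K M }.

Section Defs.
Context {R : realType} {X : pointedMetricType R}.

Definition is_homeo (f : X -> X) : Prop :=
  continuous f /\ exists g : X -> X, [/\ cancel f g, cancel g f & continuous g].

Inductive gen_group (k : nat) (g1 : 'I_k -> X -> X) : (X -> X) -> Prop :=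
  | gg_id : gen_group g1 id
  | gg_gen i : gen_group g1 (g1 i)
  | gg_inv i h : cancel (g1 i) h -> cancel h (g1 i) -> gen_group g1 h
  | gg_comp f h : gen_group g1 f -> gen_group g1 h -> gen_group g1 (f \o h).

Definition unif_equicont (G : (X -> X) -> Prop) : Prop :=
  forall eps : R, 0 < eps -> exists2 delta : R, 0 < delta &
    forall g, G g -> forall x y : X, mdist x y < delta -> mdist (g x) (g y) < eps.

Definition calG (k : nat) (g1 : 'I_k -> X -> X) (n : nat) : set (X -> X) :=
  [set g | exists w : seq 'I_k, size w = n /\
           g = foldr (fun i acc => g1 i \o acc) id w].

(* \Phi_\delta(x); all maps are globally defined so \mathcal G_n^x = \mathcal G_n *)
Definition Phi (k : nat) (g1 : 'I_k -> X -> X) (delta : R) (x : X) : set X :=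
  [set y | forall (n : nat) (g : X -> X), calG g1 n g ->
           mdist (g x) (g y) <= delta].

Definition borelX : measurableType _ := g_sigma_algebraType (@open X).

Definition weakly_expansive (k : nat) (g1 : 'I_k -> X -> X)
  (mu : probability borelX R) : Prop :=
  exists2 delta : R, 0 < delta &
    {ae mu, forall x : borelX, mu (Phi g1 delta x) = 0%E}.

End Defs.

(* Main.v *)
Require Import Defs.
From HB Require Import structures.
From mathcomp Require Import all_boot all_order all_algebra.
From mathcomp Require Import all_classical all_reals all_analysis.
Import Order.TTheory GRing.Theory Num.Theory.
Local Open Scope classical_set_scope.
Local Open Scope ring_scope.

Set Implicit Arguments.
Section Aux.
Context (R : realType) (X : pointedMetricType R) (k : nat) (g1 : 'I_k -> X -> X).

Lemma calG_gen n g : calG g1 n g -> gen_group g1 g.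
Proof.
move=> [w [_ ->]]; elim: w => [|i w IH] /=; first exact: gg_id.
by apply: gg_comp => //; exact: gg_gen.
Qed.

Lemma calG_cont n g : (forall i, is_homeo (g1 i)) -> calG g1 n g -> continuous g.
Proof.
move=> hh [w [_ ->]]; elim: w => [|i w IH] /=; first by move=> x.
move=> x; apply: (@continuous_comp _ _ _ _ (g1 i) x (IH x)).
by case: (hh i) => c _; exact: c.
Qed.

Lemma Phi_closed delta x : (forall i, is_homeo (g1 i)) -> closed (Phi g1 delta x).
Proof.
move=> hh y cly n g hg.
rewrite leNgt; apply/negP => lt.
set e := mdist (g x) (g y) - delta.
have e0 : 0 < e by rewrite subr_gt0.
have nb : nbhs y (g @^-1` ball (g y) e).
  exact: (calG_cont hh hg y _ (nbhsx_ballx _ _ e0)).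
have [z [Pz Bz]] := cly _ nb.
move: Bz; rewrite /= ballEmdist /= => Bz.
have h1 := Pz n g hg.
have := metric_triangle (g x) (g z) (g y).
rewrite (metric_sym (g z) (g y)) => h2.
have : mdist (g x) (g y) < delta + e by apply: (le_lt_trans h2); exact: ler_ltD.
by rewrite /e addrC subrK ltxx.
Qed.

Lemma closed_borel (A : set X) : closed A -> measurable (A : set (@borelX R X)).
Proof.
move=> cA; rewrite -(setCK A); apply: measurableC.
by apply: sub_sigma_algebra; rewrite openC.
Qed.

End Aux.
Unset Implicit Arguments.

Theorem theoremC (R : realType) (X : pointedMetricType R) (k : nat)
  (g1 : 'I_k -> X -> X) :
  compact [set: X] ->
  (forall i, is_homeo (g1 i)) ->
  unif_equicont (gen_group g1) ->
  ~ exists mu : probability (@borelX R X) R, weakly_expansive g1 mu.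
Proof.
move=> cX hh eq [mu [delta d0 ae]].
have [r r0 hr] := eq delta d0.
case: ae => N [mN N0 sN].
have negPhi a : ~ N a -> mu.-negligible (Phi g1 delta a : set (@borelX R X)).
  move=> Na.
  have mP : measurable (Phi g1 delta a : set (@borelX R X)).
    exact: (closed_borel (@Phi_closed R X k g1 delta a hh)).
  apply/(negligibleP _ mP).
  by apply: contrapT => h; apply: Na; apply: sN.
have ballPhi a : ball a r `<=` Phi g1 delta a.
  move=> y; rewrite ballEmdist /= => ay n g hg.
  by apply/ltW/hr => //; exact: calG_gen hg.
pose S (x : X) : set (@borelX R X) := ball x (r / 2) `&` ~` N.
have negS x : mu.-negligible (S x).
  case: (pselect (S x !=set0)) => [[a [xa Na]]|].
    apply: (negligibleS _ (negPhi a Na)) => y [xy _].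
    apply: ballPhi; rewrite (splitr r); apply: (ball_triangle (ball_sym xa) xy).
  move=> h; apply: (negligibleS _ (negligible_set0 mu)) => y Sy.
  by apply: h; exists y.
have fin (s : seq X) : mu.-negligible ([set y | exists2 x, x \in s & S x y] : set (@borelX R X)).
  elim: s => [|x s IH].
    by apply: (negligibleS _ (negligible_set0 mu)) => y [].
  apply: (negligibleS _ (negligibleU (negS x) IH)) => y [z].
  rewrite inE => /orP[/eqP -> |zs] Sz; [by left|right; by exists z].
have r20 : 0 < r / 2 by rewrite divr_gt0.
move: cX; rewrite compact_cover => /(_ X setT (fun x => interior (ball x (r / 2)))).
case.
- by move=> i _; exact: open_interior.
- move=> x _; exists x => //; exact: nbhsx_ballx.
move=> D _ cov.
have : mu.-negligible (~` N) .
  have := fin (finmap.enum_fset D). move=> fD; apply: (negligibleS _ fD) => y Ny.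
  have [x Dx ixy] := cov y I.
  exists x => //; split => //; exact: interior_subset.
move=> nC.
have nT : mu.-negligible (N `|` ~` N).
  apply: negligibleU => //; exact/negligibleP.
move: nT; rewrite setUv => /negligibleP => /(_ measurableT).

move=> h; have : (1%E : \bar R) = 0%E by rewrite -(probability_setT mu); exact: h.
by move=> /eqP; rewrite eqe oner_eq0.
Qed.
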